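(* Let $d\ge 2$ be even and fix a base $\theta>1$. Let $(u_j)_{j\ge 1}$ be a real sequence and let ${\bm v}\in\mathbb{R}^d$ with $\|{\bm v}\|_2=1$. For each $n\ge 1$ let $\boldsymbol{u}_n=(u_1,\dots,u_n)^\top\in\mathbb{R}^n$ and $\boldsymbol{X}_n=\boldsymbol{u}_n{\bm v}^\top\in\mathbb{R}^{n\times d}$. Assume: (i) there exist constants $0<c\le C<\infty$ with $c\le |u_j|\le C$ for all $j$; (ii) $\sum_{j=1}^{n-1}|u_{j+1}^2-u_j^2| = o(n)$ as $n\to\infty$; (iii) (non-resonance of frequencies) $e^{2i\theta_k}\neq 1$ for all $1\le k\le d/2$, and $e^{i(\theta_k+\theta_l)}\neq 1$, $e^{i(\theta_k-\theta_l)}\neq 1$ for all $k\neq l$ (the paper justifies this by the $\theta_k$ and $(\theta_k\pm\theta_l)/2$ being irrational multiples of $\pi$). Then, as $n\to\infty$, $$\frac{\|\mathcal{R}(\boldsymbol{X}_n)\|_2}{\|\boldsymbol{X}_n\|_2}=\frac{1}{\sqrt 2}\max_{1\le k\le d/2}\alpha_k+o(1),$$ where $\alpha_k:=\sqrt{v_{2k-1}^2+v_{2k}^2}$, and moreover $\max_k\alpha_k\in[\sqrt{2/d},\,1]$.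
   Context: RoPE action: for $\boldsymbol{X}=[\boldsymbol{x}_1,\dots,\boldsymbol{x}_n]^\top\in\mathbb{R}^{n\times d}$ ($d$ even), $\mathcal{R}(\boldsymbol{X}):=[\boldsymbol{R}_1\boldsymbol{x}_1,\dots,\boldsymbol{R}_n\boldsymbol{x}_n]^\top$, where $\boldsymbol{R}_j=\mathrm{Diag}(\boldsymbol{R}_{j,\theta_1},\dots,\boldsymbol{R}_{j,\theta_{d/2}})\in\mathbb{R}^{d\times d}$ is block diagonal with $2\times2$ blocks $\boldsymbol{R}_{j,\theta_k}=\begin{bmatrix}\cos(j\theta_k)&-\sin(j\theta_k)\\ \sin(j\theta_k)&\cos(j\theta_k)\end{bmatrix}$ and frequencies $\theta_k=\theta^{-2(k-1)/d}$, $1\le k\le d/2$, for a base $\theta>1$. The $k$-th rotation plane of a vector ${\bm v}$ is the subvector $(v_{2k-1},v_{2k})$. $\|\cdot\|_2$ denotes the Euclidean norm of a vector and the spectral norm (largest singular value) of a matrix. *)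

(* Defs.v *)
From HB Require Import structures.
From mathcomp Require Import all_boot all_order all_algebra.
From mathcomp Require Import all_classical all_reals all_analysis.
Set Implicit Arguments. Unset Strict Implicit. Unset Printing Implicit Defensive.
Import Order.TTheory GRing.Theory Num.Theory.
Import numFieldNormedType.Exports.
Local Open Scope classical_set_scope.
Local Open Scope ring_scope.

Section RoPE.
Variable R : realType.

Definition vnorm (n : nat) (x : 'cV[R]_n) : R := Num.sqrt (\sum_(i < n) x i 0 ^+ 2).

Definition specnorm (m n : nat) (A : 'M[R]_(m, n)) : R :=
  sup [set vnorm (A *m x) | x in [set x : 'cV[R]_n | vnorm x <= 1]].

(* coordinate a (0-based) of v, 0 if out of range *)
Definition vcoord (d : nat) (v : 'cV[R]_d) (a : nat) : R :=
  odflt 0 (omap (fun i : 'I_d => v i 0) (insub a)).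

(* frequency theta_{k+1} = theta^(-2k/d), k 0-based (k = 0 .. d/2 - 1) *)
Definition freq (theta : R) (d k : nat) : R :=
  theta `^ (- ((2 * k)%:R / d%:R)).

(* block-diagonal rotation matrix R_j (d x d); 0-based coordinate a lies in
   rotation plane a./2, block rows (2k, 2k+1) = paper's (2k-1, 2k) *)
Definition rotmx (theta : R) (d j : nat) : 'M[R]_d :=
  \matrix_(a < d, b < d)
    let ang := j%:R * freq theta d (a./2)%N in
    if (a./2 == b./2)%N then
      if (a == b :> nat) then cos ang
      else if ~~ odd a then - sin ang else sin ang
    else 0.

(* RoPE action: row i (0-based) is position j = i+1: x_j |-> R_j x_j *)
Definition rope (theta : R) (n d : nat) (X : 'M[R]_(n, d)) : 'M[R]_(n, d) :=
  \matrix_(i < n, b < d) \sum_(a < d) rotmx theta d i.+1 b a * X i a.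

(* alpha_{k+1} = sqrt(v_{2k+1}^2 + v_{2k+2}^2), k 0-based *)
Definition alpha (d : nat) (v : 'cV[R]_d) (k : nat) : R :=
  Num.sqrt (vcoord v (2 * k) ^+ 2 + vcoord v (2 * k).+1 ^+ 2).

Definition max_alpha (d : nat) (v : 'cV[R]_d) : R :=
  \big[Num.max/0]_(k < d./2) alpha v k.

(* e^{i x} <> 1, written via Euler: cos x + i sin x <> 1 *)
Definition expi_ne1 (x : R) : Prop := ~ (cos x = 1 /\ sin x = 0).

Definition Xmat (d : nat) (u : nat -> R) (v : 'cV[R]_d) (n : nat) : 'M[R]_(n, d) :=
  \matrix_(i < n, c < d) (u i.+1 * v c 0).

End RoPE.

(* Main.v *)
Require Import Defs.
From HB Require Import structures.
From mathcomp Require Import all_boot all_order all_algebra.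
From mathcomp Require Import all_classical all_reals all_analysis.
From mathcomp Require Import ring lra zify.
From Stdlib Require Import Lia.
Import Order.TTheory GRing.Theory Num.Theory.
Import numFieldNormedType.Exports.
Local Open Scope classical_set_scope.
Local Open Scope ring_scope.
Section All.
Variable R : realType.

Lemma vcoordE d (v : 'cV[R]_d) (i : 'I_d) : vcoord v i = v i 0.
Proof. by rewrite /vcoord valK. Qed.

Lemma vcoord_out d (v : 'cV[R]_d) a : (d <= a)%N -> vcoord v a = 0.
Proof. by move=> h; rewrite /vcoord insubF // ltnNge h. Qed.

Lemma sum_ind d (f : nat -> R) k :
  \sum_(a < d) (if (a : nat) == k then f a else 0) = if (k < d)%N then f k else 0.
Proof.
case: (ltnP k d) => H.
  rewrite (bigD1 (Ordinal H)) //= eqxx big1 ?addr0 // => i Hi.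
  case: eqP => // e; move: Hi; suff -> : i = Ordinal H by rewrite eqxx.
  by apply: val_inj.
apply: big1 => i _; case: eqP => // e.
by move: (ltn_ord i); rewrite e ltnNge H.
Qed.

Lemma sum_vc d (v : 'cV[R]_d) (c : R) k :
  \sum_(a < d) (if (a : nat) == k then c * vcoord v a else 0) = c * vcoord v k.
Proof.
rewrite (sum_ind d (fun a => c * vcoord v a)); case: ifP => // /negbT.
by rewrite -leqNgt => h; rewrite vcoord_out // mulr0.
Qed.

Lemma sum_ord_ind d (F : 'I_d -> R) k (hk : (k < d)%N) :
  \sum_(a < d) (if (a : nat) == k then 1 else 0) * F a = F (Ordinal hk).
Proof.
rewrite (bigD1 (Ordinal hk)) //= eqxx mul1r big1 ?addr0 // => i Hi.
case: eqP => [e|]; last by rewrite mul0r.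
have ei : i = Ordinal hk by apply: val_inj; rewrite /= e.
by rewrite ei eqxx in Hi.
Qed.

Lemma vnorm2 n (x : 'cV[R]_n) : vnorm x ^+ 2 = \sum_(i < n) x i 0 ^+ 2.
Proof. by rewrite /vnorm sqr_sqrtr // sumr_ge0 // => i _; exact: sqr_ge0. Qed.

Lemma vnorm_ge0 n (x : 'cV[R]_n) : 0 <= vnorm x.
Proof. exact: sqrtr_ge0. Qed.

Lemma vnorm_le1 n (x : 'cV[R]_n) : vnorm x <= 1 -> \sum_(i < n) x i 0 ^+ 2 <= 1.
Proof.
move=> h; rewrite -vnorm2 -(expr1n _ 2).
by rewrite ler_pXn2r // ?nnegrE ?vnorm_ge0.
Qed.

Lemma sup_bounds (S : set R) (L M : R) : (forall y, S y -> y <= M) ->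
  (exists2 y, S y & L <= y) -> L <= sup S <= M.
Proof.
move=> hub [y Sy Ly]; apply/andP; split.
  apply: (le_trans Ly); apply: sup_upper_bound => //.
  by split; [exists y | exists M].
by apply: ge_sup; [exists y | ].
Qed.


Definition ssq (u : nat -> R) n := \sum_(i < n) u i.+1 ^+ 2.

Lemma ssq_ge0 u n : 0 <= ssq u n.
Proof. by apply: sumr_ge0 => i _; exact: sqr_ge0. Qed.

Definition dot {d} (v x : 'cV[R]_d) := \sum_(c < d) v c 0 * x c 0.

Lemma dot_le1 d (v x : 'cV[R]_d) : \sum_(c < d) v c 0 ^+ 2 = 1 ->
  \sum_(c < d) x c 0 ^+ 2 <= 1 -> `|dot v x| <= 1.
Proof.
move=> hv hx; rewrite ler_norml; apply/andP; split.
  have : 0 <= \sum_(c < d) (v c 0 + x c 0) ^+ 2 by apply: sumr_ge0 => i _; exact: sqr_ge0.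
  have -> : \sum_(c < d) (v c 0 + x c 0) ^+ 2 =
     \sum_(c < d) v c 0 ^+ 2 + \sum_(c < d) x c 0 ^+ 2 + 2 * dot v x.
    rewrite /dot mulr_sumr -!big_split /=; apply: eq_bigr => i _; ring.
  rewrite hv; lra.
have : 0 <= \sum_(c < d) (v c 0 - x c 0) ^+ 2 by apply: sumr_ge0 => i _; exact: sqr_ge0.
have -> : \sum_(c < d) (v c 0 - x c 0) ^+ 2 =
   \sum_(c < d) v c 0 ^+ 2 + \sum_(c < d) x c 0 ^+ 2 - 2 * dot v x.
  rewrite /dot mulr_sumr -big_split -sumrB /=; apply: eq_bigr => i _; ring.
rewrite hv; lra.
Qed.

Lemma vnormX d (u : nat -> R) (v : 'cV[R]_d) n (x : 'cV[R]_d) :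
  vnorm (Xmat u v n *m x) = Num.sqrt (ssq u n) * `|dot v x|.
Proof.
rewrite /vnorm.
have -> : \sum_(i < n) (Xmat u v n *m x) i 0 ^+ 2 = ssq u n * dot v x ^+ 2.
  rewrite /ssq mulr_suml; apply: eq_bigr => i _.
  rewrite !mxE /dot -exprMn mulr_sumr; congr (_ ^+ 2); apply: eq_bigr => c _.
  by rewrite /Xmat mxE mulrA.
by rewrite sqrtrM ?ssq_ge0 // sqrtr_sqr.
Qed.

Lemma specX d (u : nat -> R) (v : 'cV[R]_d) n : vnorm v = 1 ->
  specnorm (Xmat u v n) = Num.sqrt (ssq u n).
Proof.
move=> hv; have hv2 : \sum_(c < d) v c 0 ^+ 2 = 1 by rewrite -vnorm2 hv expr1n.
apply/eqP; rewrite eq_le andbC /specnorm; apply: sup_bounds.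
  move=> y [x /= hx <-]; rewrite vnormX -[X in _ <= X]mulr1.
  by rewrite ler_wpM2l ?sqrtr_ge0 // dot_le1 // vnorm_le1.
exists (vnorm (Xmat u v n *m v)); first by exists v => //=; rewrite hv.
by rewrite vnormX /dot -[X in X <= _]mulr1; under eq_bigr do rewrite -expr2; rewrite hv2 normr1.
Qed.


Lemma sin_half_neq0 (phi : R) : expi_ne1 phi -> sin (phi / 2) != 0.
Proof.
move=> H; apply/eqP => h; apply: H.
have e : phi = phi / 2 + phi / 2 by field.
split; rewrite e.
  by rewrite cosD h mulr0 subr0 -expr2 cos2sin2 h expr0n /= subr0.
by rewrite sinD h mul0r mulr0 addr0.
Qed.

Lemma div_bound (s x : R) : s != 0 -> `|s| * `|x| <= 1 -> `|x| <= `|s|^-1.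
Proof.
move=> hs h; have hs' : `|s| != 0 by rewrite normr_eq0.
by rewrite -[X in X <= _](mulKf hs') -[X in _ <= X]mulr1 ler_wpM2l // invr_ge0.
Qed.

Lemma sum_cos_bound (phi : R) m : expi_ne1 phi ->
  `|\sum_(i < m) cos (i.+1%:R * phi)| <= `|sin (phi / 2)|^-1.
Proof.
move=> H; have hs := sin_half_neq0 _ H; apply: div_bound => //.
set h := phi / 2; pose g (i : nat) := sin (i%:R * phi + h).
have key : 2 * sin h * \sum_(i < m) cos (i.+1%:R * phi) = g m - g 0%N.
  rewrite mulr_sumr.
  transitivity (\sum_(i < m) (g i.+1 - g i)).
    apply: eq_bigr => i _; rewrite /g.
    have -> : i%:R * phi + h = i.+1%:R * phi - h by rewrite -natr1 /h; field.
    rewrite sinD sinB; ring.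
  by rewrite -(big_mkord xpredT (fun i => g i.+1 - g i)) telescope_sumr.
have : `|2 * sin h * \sum_(i < m) cos (i.+1%:R * phi)| <= 2.
  rewrite key; apply: (le_trans (ler_normB _ _)).
  by have := sin_max (m%:R * phi + h); have := sin_max (0%:R * phi + h); rewrite /g; lra.
rewrite !normrM ger0_norm //; lra.
Qed.

Lemma sum_sin_bound (phi : R) m : expi_ne1 phi ->
  `|\sum_(i < m) sin (i.+1%:R * phi)| <= `|sin (phi / 2)|^-1.
Proof.
move=> H; have hs := sin_half_neq0 _ H; apply: div_bound => //.
set h := phi / 2; pose g (i : nat) := cos (i%:R * phi + h).
have key : 2 * sin h * \sum_(i < m) sin (i.+1%:R * phi) = - (g m - g 0%N).
  rewrite mulr_sumr.
  transitivity (\sum_(i < m) - (g i.+1 - g i)).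
    apply: eq_bigr => i _; rewrite /g.
    have -> : i%:R * phi + h = i.+1%:R * phi - h by rewrite -natr1 /h; field.
    rewrite cosD cosB; ring.
  by rewrite sumrN -(big_mkord xpredT (fun i => g i.+1 - g i)) telescope_sumr.
have : `|2 * sin h * \sum_(i < m) sin (i.+1%:R * phi)| <= 2.
  rewrite key normrN; apply: (le_trans (ler_normB _ _)).
  by have := cos_max (m%:R * phi + h); have := cos_max (0%:R * phi + h); rewrite /g; lra.
rewrite !normrM ger0_norm //; lra.
Qed.

Lemma abel (a c : nat -> R) n :
  \sum_(i < n.+1) a i * c i = a n * (\sum_(i < n.+1) c i)
     - \sum_(i < n) (a i.+1 - a i) * (\sum_(k < i.+1) c k).
Proof.
elim: n => [|n IH].
  by rewrite !big_ord_recr !big_ord0 /=; ring.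
rewrite big_ord_recr IH /=.
have -> : \sum_(i < n.+2) c i = \sum_(i < n.+1) c i + c n.+1 by rewrite big_ord_recr.
have -> : \sum_(i < n.+1) (a i.+1 - a i) * (\sum_(k < i.+1) c k) =
  \sum_(i < n) (a i.+1 - a i) * (\sum_(k < i.+1) c k) + (a n.+1 - a n) * \sum_(k < n.+1) c k.
  by rewrite big_ord_recr.
ring.
Qed.

Lemma abel_bound (a c : nat -> R) (B : R) n :
  (forall m, `|\sum_(k < m) c k| <= B) ->
  `|\sum_(i < n.+1) a i * c i| <= B * (`|a n| + \sum_(i < n) `|a i.+1 - a i|).
Proof.
move=> hB; rewrite abel; apply: (le_trans (ler_normB _ _)).
rewrite mulrDr; apply: lerD.
  by rewrite normrM mulrC ler_wpM2r.
apply: (le_trans (ler_norm_sum _ _ _)); rewrite mulr_sumr; apply: ler_sum => i _.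
by rewrite normrM mulrC ler_wpM2r.
Qed.

Definition Tc (u : nat -> R) phi n := \sum_(i < n) u i.+1 ^+ 2 * cos (i.+1%:R * phi).
Definition Ts (u : nat -> R) phi n := \sum_(i < n) u i.+1 ^+ 2 * sin (i.+1%:R * phi).
Definition Vs (u : nat -> R) n := \sum_(1 <= j < n) `|u j.+1 ^+ 2 - u j ^+ 2|.
Definition Bf (phi : R) := `|sin (phi / 2)|^-1.

Lemma Bf_ge0 phi : 0 <= Bf phi.
Proof. by rewrite /Bf invr_ge0. Qed.

Lemma Vs_ge0 u n : 0 <= Vs u n.
Proof. by apply: sumr_ge0. Qed.

Lemma Vs_shift u m : Vs u m.+1 = \sum_(i < m) `|u i.+2 ^+ 2 - u i.+1 ^+ 2|.
Proof. by rewrite /Vs big_add1 /= big_mkord. Qed.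

Lemma T_bound (u : nat -> R) (C : R) (f : R -> R) phi n :
  (forall j, (1 <= j)%N -> `|u j| <= C) ->
  (forall m, `|\sum_(k < m) f (k.+1%:R * phi)| <= Bf phi) ->
  `|\sum_(i < n) u i.+1 ^+ 2 * f (i.+1%:R * phi)| <= Bf phi * (C ^+ 2 + Vs u n).
Proof.
move=> hC hf; case: n => [|m].
  rewrite big_ord0 normr0 mulr_ge0 ?Bf_ge0 // addr_ge0 ?Vs_ge0 //; exact: sqr_ge0.
apply: (le_trans (abel_bound (fun i => u i.+1 ^+ 2) (fun k => f (k.+1%:R * phi)) _ m hf)).
rewrite Vs_shift ler_wpM2l ?Bf_ge0 // lerD2r.
have h1 := hC m.+1 isT; have h0 := normr_ge0 (u m.+1).
rewrite normrX; nra.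
Qed.

Lemma Tc_bound u C phi n : expi_ne1 phi -> (forall j, (1 <= j)%N -> `|u j| <= C) ->
  `|Tc u phi n| <= Bf phi * (C ^+ 2 + Vs u n).
Proof. move=> H hC; apply: T_bound => // m; exact: sum_cos_bound. Qed.

Lemma Ts_bound u C phi n : expi_ne1 phi -> (forall j, (1 <= j)%N -> `|u j| <= C) ->
  `|Ts u phi n| <= Bf phi * (C ^+ 2 + Vs u n).
Proof. move=> H hC; apply: T_bound => // m; exact: sum_sin_bound. Qed.

Variables (d : nat) (theta : R) (u : nat -> R) (v : 'cV[R]_d).

Definition fr k := freq theta d k.
Definition vc a := vcoord v a.
Definition pp a := vc a.
Definition qq a := if odd a then vc a.-1 else - vc a.+1.
Definition partner (a : nat) := if odd a then a.-1 else a.+1.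
Definition w (j a : nat) := pp a * cos (j%:R * fr a./2) + qq a * sin (j%:R * fr a./2).

Lemma partner_eq (a b : nat) : a./2 = b./2 -> a != b -> b = partner a.
Proof.
rewrite /partner => e ne.
have ha := odd_double_half a; have hb := odd_double_half b.
rewrite -!muln2 e in ha hb; move: ha hb ne.
case: (odd a); case: (odd b) => /= ha hb ne; lia.
Qed.

Lemma partner_half a : (partner a)./2 = a./2.
Proof.
rewrite /partner.
have h := odd_double_half a.
set k := a./2 in h *.
have h1 := half_bit_double k true; have h0 := half_bit_double k false; simpl in h1, h0.
by case: (odd a) h => /= h; rewrite -h /=.
Qed.

Lemma partner_neq a : partner a != a.
Proof.
rewrite /partner; case: ifP => h; last by rewrite eq_sym neq_ltn ltnSn.
by case: a h => //= a _; rewrite neq_ltn ltnSn.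
Qed.

Lemma row_sum j (b : 'I_d) :
  \sum_(a < d) rotmx theta d j b a * vc a = w j b.
Proof.
pose ang := j%:R * fr (b./2).
transitivity (\sum_(a < d) ((if (a : nat) == b then cos ang * vc a else 0) +
   (if (a : nat) == partner b then (if odd b then sin ang else - sin ang) * vc a else 0))).
  apply: eq_bigr => a _; rewrite /rotmx mxE.
  have [eab|nab] := eqVneq (a : nat) (b : nat).
    rewrite eab eqxx /= ifF ?addr0 //; last by apply/negbTE; rewrite eq_sym partner_neq.
  rewrite add0r.
  case: (eqVneq (b./2) (a./2)) => [e|ne].
    have hp : (a : nat) = partner b by apply: (@partner_eq b a e); rewrite eq_sym.
    rewrite hp eqxx.
    by rewrite /fr; case: (odd b) => /=; rewrite ?mulNr.
  rewrite ifF; last first.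
    apply/negbTE; apply: contra ne => /eqP ->; by rewrite partner_half.
  by rewrite mul0r.
rewrite big_split /= /vc sum_vc sum_vc /w /pp /qq /partner /vc.
by rewrite /ang; case: (odd b) => /=; ring.
Qed.

Lemma rope_entry n (i : 'I_n) (b : 'I_d) :
  rope theta (Xmat u v n) i b = u i.+1 * w i.+1 b.
Proof.
rewrite /rope mxE -row_sum mulr_sumr; apply: eq_bigr => a _.
by rewrite /Xmat /rotmx !mxE /vc vcoordE mulrCA.
Qed.


Definition G a b n := \sum_(i < n) u i.+1 ^+ 2 * (w i.+1 a * w i.+1 b).

Lemma vnorm_rope2 n (x : 'cV[R]_d) :
  vnorm (rope theta (Xmat u v n) *m x) ^+ 2 =
  \sum_(a < d) \sum_(b < d) x a 0 * x b 0 * G a b n.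
Proof.
rewrite vnorm2.
transitivity (\sum_(i < n) \sum_(a < d) \sum_(b < d)
   x a 0 * x b 0 * (u i.+1 ^+ 2 * (w i.+1 a * w i.+1 b))).
  apply: eq_bigr => i _; rewrite mxE expr2 mulr_suml; apply: eq_bigr => a _.
  rewrite mulr_sumr; apply: eq_bigr => b _; rewrite !rope_entry; ring.
rewrite exchange_big; apply: eq_bigr => a _; rewrite exchange_big.
by apply: eq_bigr => b _; rewrite /G mulr_sumr.
Qed.

Definition c1 a b := (pp a * pp b + qq a * qq b) / 2.
Definition c2 a b := (pp a * pp b - qq a * qq b) / 2.
Definition c3 a b := (pp a * qq b + qq a * pp b) / 2.
Definition c4 a b := (qq a * pp b - pp a * qq b) / 2.
Definition tt a := fr a./2.

Lemma ww j a b : w j a * w j b =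
  c1 a b * cos (j%:R * (tt a - tt b)) + c2 a b * cos (j%:R * (tt a + tt b))
  + c3 a b * sin (j%:R * (tt a + tt b)) + c4 a b * sin (j%:R * (tt a - tt b)).
Proof.
rewrite /w /tt !mulrDr !mulrN !cosD !sinD !cosN !sinN /c1 /c2 /c3 /c4; by field.
Qed.

Lemma G_expand a b n : G a b n =
  c1 a b * Tc u (tt a - tt b) n + c2 a b * Tc u (tt a + tt b) n
  + c3 a b * Ts u (tt a + tt b) n + c4 a b * Ts u (tt a - tt b) n.
Proof.
rewrite /G /Tc /Ts !mulr_sumr -!big_split /=; apply: eq_bigr => i _.
rewrite ww; ring.
Qed.

Lemma Tc0 n : Tc u 0 n = ssq u n.
Proof. by apply: eq_bigr => i _; rewrite mulr0 cos0 mulr1. Qed.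

Lemma Ts0 n : Ts u 0 n = 0.
Proof. by apply: big1 => i _; rewrite mulr0 sin0 mulr0. Qed.

Definition Dm a b := if a./2 == b./2 then c1 a b else 0.
Definition Kab a b := (`|c1 a b| + `|c4 a b|) * Bf (tt a - tt b)
   + (`|c2 a b| + `|c3 a b|) * Bf (tt a + tt b).

Lemma cT_bound (c T B W : R) : `|T| <= B * W -> `|c * T| <= `|c| * (B * W).
Proof. by move=> h; rewrite normrM ler_wpM2l. Qed.

Lemma err_bound0 a b n (C : R) :
  (forall j, (1 <= j)%N -> `|u j| <= C) ->
  (a./2 == b./2 -> expi_ne1 (tt a + tt b)) ->
  (a./2 != b./2 -> expi_ne1 (tt a + tt b) /\ expi_ne1 (tt a - tt b)) ->
  `|G a b n - Dm a b * ssq u n| <= Kab a b * (C ^+ 2 + Vs u n).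
Proof.
move=> hC hsame hdiff; set W := C ^+ 2 + Vs u n.
have hW : 0 <= W by rewrite addr_ge0 ?Vs_ge0 ?sqr_ge0.
have p1 := normr_ge0 (c1 a b); have p2 := normr_ge0 (c2 a b).
have p3 := normr_ge0 (c3 a b); have p4 := normr_ge0 (c4 a b).
have bd := Bf_ge0 (tt a - tt b); have bs := Bf_ge0 (tt a + tt b).
rewrite G_expand /Dm /Kab; case: ifP => e.
  have ett : tt a = tt b by rewrite /tt (eqP e).
  have hs := hsame e.
  have t2 := @cT_bound (c2 a b) _ _ _ (Tc_bound u C _ n hs hC).
  have t3 := @cT_bound (c3 a b) _ _ _ (Ts_bound u C _ n hs hC).
  rewrite ett subrr Tc0 Ts0 mulr0 addr0 -ett.
  have -> : c1 a b * ssq u n + c2 a b * Tc u (tt a + tt a) n + c3 a b * Ts u (tt a + tt a) n -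
     c1 a b * ssq u n = c2 a b * Tc u (tt a + tt a) n + c3 a b * Ts u (tt a + tt a) n by ring.
  apply: (le_trans (ler_normD _ _)).
  have q1 : 0 <= (`|c1 a b| + `|c4 a b|) * Bf (tt a - tt a) * W.
    by apply: mulr_ge0 => //; apply: mulr_ge0; [apply: addr_ge0 | apply: Bf_ge0].
  move: t2 t3 q1; rewrite -ett subrr -/W => h2 h3 h1; nra.
have [hs hd] := hdiff (negbT e).
have t1 := @cT_bound (c1 a b) _ _ _ (Tc_bound u C _ n hd hC).
have t2 := @cT_bound (c2 a b) _ _ _ (Tc_bound u C _ n hs hC).
have t3 := @cT_bound (c3 a b) _ _ _ (Ts_bound u C _ n hs hC).
have t4 := @cT_bound (c4 a b) _ _ _ (Ts_bound u C _ n hd hC).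
rewrite mul0r subr0.
apply: (le_trans (ler_normD _ _)); apply: (le_trans (lerD (ler_normD _ _) (lexx _))).
apply: (le_trans (lerD (lerD (ler_normD _ _) (lexx _)) (lexx _))).
move: t1 t2 t3 t4; rewrite -/W; nra.
Qed.

Lemma half_lt a : ~~ odd d -> (a < d)%N -> (a./2 < d./2)%N.
Proof.
move=> hd ha; rewrite ltn_half_double.
have := odd_double_half d; rewrite (negbTE hd) add0n => ->; exact: ha.
Qed.

Lemma Kab_ge0 a b : 0 <= Kab a b.
Proof.
by rewrite /Kab addr_ge0 // mulr_ge0 ?Bf_ge0 // addr_ge0.
Qed.

Lemma err_pair a b n (C : R) : ~~ odd d ->
  (forall k : nat, (k < d./2)%N -> expi_ne1 (2 * freq theta d k)) ->
  (forall k l : nat, (k < d./2)%N -> (l < d./2)%N -> k <> l ->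
     expi_ne1 (freq theta d k + freq theta d l) /\
     expi_ne1 (freq theta d k - freq theta d l)) ->
  (a < d)%N -> (b < d)%N ->
  (forall j, (1 <= j)%N -> `|u j| <= C) -> 0 < ssq u n ->
  `|G a b n / ssq u n - Dm a b| <= Kab a b * ((C ^+ 2 + Vs u n) / ssq u n).
Proof.
move=> hd H1 H2 ha hb hC hs.
have -> : G a b n / ssq u n - Dm a b = (G a b n - Dm a b * ssq u n) / ssq u n.
  by field; rewrite gt_eqF.
rewrite normrM normfV (gtr0_norm hs) mulrA ler_wpM2r ?invr_ge0 ?(ltW hs) //.
apply: err_bound0 => //.
  move=> /eqP e; rewrite /tt -e.
  have -> : fr a./2 + fr a./2 = 2 * freq theta d a./2 by rewrite /fr; ring.
  by apply: H1; apply: half_lt.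
move=> ne; apply: H2; try apply: half_lt => //.
by move=> e; rewrite e eqxx in ne.
Qed.

Definition Eerr n := \sum_(a < d) \sum_(b < d) `|G a b n / ssq u n - Dm a b|.
Definition Ktot := \sum_(a < d) \sum_(b < d) Kab a b.

Lemma Ktot_ge0 : 0 <= Ktot.
Proof. by apply: sumr_ge0 => a _; apply: sumr_ge0 => b _; exact: Kab_ge0. Qed.

Lemma Eerr_ge0 n : 0 <= Eerr n.
Proof. by apply: sumr_ge0 => a _; apply: sumr_ge0. Qed.

Lemma E_bound n (C : R) : ~~ odd d ->
  (forall k : nat, (k < d./2)%N -> expi_ne1 (2 * freq theta d k)) ->
  (forall k l : nat, (k < d./2)%N -> (l < d./2)%N -> k <> l ->
     expi_ne1 (freq theta d k + freq theta d l) /\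
     expi_ne1 (freq theta d k - freq theta d l)) ->
  (forall j, (1 <= j)%N -> `|u j| <= C) -> 0 < ssq u n ->
  Eerr n <= Ktot * ((C ^+ 2 + Vs u n) / ssq u n).
Proof.
move=> hd H1 H2 hC hs; rewrite /Eerr /Ktot mulr_suml; apply: ler_sum => a _.
rewrite mulr_suml; apply: ler_sum => b _; exact: err_pair.
Qed.

Lemma Dm_off a b : a != b -> Dm a b = 0.
Proof.
move=> ne; rewrite /Dm; case: ifP => // /eqP e.
rewrite (partner_eq a b e ne) /c1 /pp /qq /partner.
case: a ne e => [|a] ne e /=.
  by rewrite /=; field.
case ho: (odd a) => /=.
  by rewrite ho /=; field.
by rewrite ho /=; field.
Qed.

Lemma alpha2 k : alpha v k ^+ 2 = vc (2 * k)%N ^+ 2 + vc (2 * k).+1 ^+ 2.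
Proof. by rewrite /alpha sqr_sqrtr // addr_ge0 ?sqr_ge0. Qed.

Lemma c1_diag a : c1 a a = alpha v (a./2) ^+ 2 / 2.
Proof.
rewrite alpha2 /c1 /pp /qq mul2n.
have h := odd_double_half a.
set k := a./2 in h *.
case: (odd a) h => /= h; rewrite -h /=.
  by rewrite add1n /=; field.
by rewrite add0n; field.
Qed.

Lemma xDx (x : 'cV[R]_d) :
  \sum_(a < d) \sum_(b < d) x a 0 * x b 0 * Dm a b = \sum_(a < d) x a 0 ^+ 2 * c1 a a.
Proof.
apply: eq_bigr => a _; rewrite (bigD1 a) //= big1 ?addr0.
  by rewrite /Dm eqxx expr2.
move=> b hb; rewrite Dm_off ?mulr0 //.
by apply: contra hb => /eqP e; apply/eqP/val_inj.
Qed.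

Lemma alpha_ge0 k : 0 <= alpha v k.
Proof. exact: sqrtr_ge0. Qed.

Lemma alpha_le_max k : (k < d./2)%N -> alpha v k <= max_alpha v.
Proof.
move=> hk; rewrite /max_alpha.
exact: (le_bigmax (I := 'I_(d./2)) 0 (fun k : 'I_(d./2) => alpha v k) (Ordinal hk)).
Qed.

Lemma xDx_le (x : 'cV[R]_d) : ~~ odd d -> \sum_(a < d) x a 0 ^+ 2 <= 1 ->
  \sum_(a < d) x a 0 ^+ 2 * c1 a a <= max_alpha v ^+ 2 / 2.
Proof.
move=> hd hx.
apply: (le_trans (y := \sum_(a < d) x a 0 ^+ 2 * (max_alpha v ^+ 2 / 2))).
  apply: ler_sum => a _; rewrite c1_diag ler_wpM2l ?sqr_ge0 // ler_wpM2r ?invr_ge0 //.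
  have h1 := alpha_le_max _ (half_lt a hd (ltn_ord a)); have h0 := alpha_ge0 (a./2).
  nra.
rewrite -mulr_suml -[X in _ <= X]mul1r ler_wpM2r //.
by rewrite mulr_ge0 ?sqr_ge0 ?invr_ge0.
Qed.

Lemma eq_le_x (a : R) : a = 1 -> a <= 1.
Proof. by move->. Qed.

Lemma sqrt_sub_bound (y x e : R) : 0 <= y -> 0 <= e -> y <= x + e ->
  Num.sqrt y <= Num.sqrt x + Num.sqrt e.
Proof.
move=> hy he hyx; case: (lerP x 0) => hx.
  rewrite (ler0_sqrtr hx) add0r; apply: ler_wsqrtr; lra.
have hsx := sqrtr_ge0 x; have hse := sqrtr_ge0 e.
rewrite -[X in _ <= X](@ger0_norm _ (Num.sqrt x + Num.sqrt e)) ?addr_ge0 //.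
rewrite -sqrtr_sqr; apply: ler_wsqrtr.
have e1 := sqr_sqrtr (ltW hx); have e2 := sqr_sqrtr he.
nra.
Qed.

Lemma xa_le1 (x : 'cV[R]_d) (a : 'I_d) : \sum_(i < d) x i 0 ^+ 2 <= 1 -> `|x a 0| <= 1.
Proof.
move=> hx; have : x a 0 ^+ 2 <= 1.
  apply: le_trans hx; rewrite (bigD1 a) //= lerDl; apply: sumr_ge0 => i _; exact: sqr_ge0.
move=> h; rewrite ler_norml; apply/andP; split; nra.
Qed.

Lemma quad_err (x : 'cV[R]_d) (e : 'I_d -> 'I_d -> R) : \sum_(i < d) x i 0 ^+ 2 <= 1 ->
  `|\sum_(a < d) \sum_(b < d) x a 0 * x b 0 * e a b| <= \sum_(a < d) \sum_(b < d) `|e a b|.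
Proof.
move=> hx; apply: (le_trans (ler_norm_sum _ _ _)); apply: ler_sum => a _.
apply: (le_trans (ler_norm_sum _ _ _)); apply: ler_sum => b _.
rewrite !normrM; have ha := xa_le1 x a hx; have hb := xa_le1 x b hx.
by rewrite -[X in _ <= X]mul1r ler_wpM2r // mulr_ile1.
Qed.

Lemma Q_expand n (x : 'cV[R]_d) : 0 < ssq u n ->
  vnorm (rope theta (Xmat u v n) *m x) ^+ 2 = ssq u n * (\sum_(a < d) x a 0 ^+ 2 * c1 a a
    + \sum_(a < d) \sum_(b < d) x a 0 * x b 0 * (G a b n / ssq u n - Dm a b)).
Proof.
move=> hs; rewrite vnorm_rope2 -xDx -big_split mulr_sumr; apply: eq_bigr => a _.
rewrite -big_split mulr_sumr; apply: eq_bigr => b _.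
change (x a 0 * x b 0 * G a b n = ssq u n * (x a 0 * x b 0 * Dm a b + x a 0 * x b 0 * (G a b n / ssq u n - Dm a b))).
by field; rewrite gt_eqF.
Qed.

Lemma vnorm_sqrt n (y : 'cV[R]_n) : vnorm y = Num.sqrt (vnorm y ^+ 2).
Proof. by rewrite sqrtr_sqr ger0_norm ?vnorm_ge0. Qed.

Lemma exists_kmax : (2 <= d)%N -> exists2 k, (k < d./2)%N & alpha v k = max_alpha v.
Proof.
move=> hd2; have h0 : (0 < d./2)%N by rewrite half_gt0.
exists [arg max_(i > Ordinal h0) alpha v i]%O => //.
rewrite /max_alpha (bigmax_eq_arg 0 (Ordinal h0) xpredT (fun k : 'I_(d./2) => alpha v k)) //.
move=> i _; exact: alpha_ge0.
Qed.

Lemma max_alpha_ge0 : (2 <= d)%N -> 0 <= max_alpha v.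
Proof. by move=> hd2; case: (exists_kmax hd2) => k _ <-; exact: alpha_ge0. Qed.

Lemma spec_rope_bounds n : ~~ odd d -> (2 <= d)%N -> 0 < ssq u n ->
  Num.sqrt (ssq u n * (max_alpha v ^+ 2 / 2 - Eerr n))
    <= specnorm (rope theta (Xmat u v n))
    <= Num.sqrt (ssq u n * (max_alpha v ^+ 2 / 2 + Eerr n)).
Proof.
move=> hd hd2 hs; apply: sup_bounds.
  move=> y [x /= hx <-]; rewrite vnorm_sqrt (Q_expand _ _ hs); apply: ler_wsqrtr.
  rewrite ler_wpM2l ?(ltW hs) //; have hx' := vnorm_le1 _ x hx.
  apply: lerD; first exact: xDx_le.
  by apply: (le_trans (ler_norm _)); apply: quad_err.
case: (exists_kmax hd2) => k hk hkm.
have hd2' : (d./2).*2 = d by have := odd_double_half d; rewrite (negbTE hd) add0n.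
have ha : ((2 * k)%N < d)%N by rewrite -{1}hd2' mul2n ltn_double.
pose e : 'cV[R]_d := \col_(i < d) (if (i : nat) == (2 * k)%N then 1 else 0).
have he : \sum_(i < d) e i 0 ^+ 2 = 1.
  transitivity (\sum_(i < d) (if (i : nat) == (2 * k)%N then (fun _ => 1 : R) i else 0)).
    by apply: eq_bigr => i _; rewrite mxE; case: ifP; rewrite ?expr1n ?expr0n.
  by rewrite (sum_ind d (fun=> 1)) ha.
exists (vnorm (rope theta (Xmat u v n) *m e)).
  by exists e => //=; rewrite /vnorm he sqrtr1.
rewrite vnorm_sqrt (Q_expand _ _ hs); apply: ler_wsqrtr.
rewrite ler_wpM2l ?(ltW hs) //.
have -> : \sum_(a < d) e a 0 ^+ 2 * c1 a a = max_alpha v ^+ 2 / 2.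
  transitivity (\sum_(a < d) (if (a : nat) == (2 * k)%N then 1 else 0) * c1 a a).
    by apply: eq_bigr => i _; rewrite mxE; case: ifP; rewrite ?expr1n ?expr0n.
  by rewrite sum_ord_ind /= c1_diag mul2n doubleK hkm.
have hq := quad_err e (fun a b : 'I_d => G a b n / ssq u n - Dm a b) (eq_le_x _ he).
rewrite ler_norml in hq; case/andP: hq => hq _.
rewrite /Eerr; lra.
Qed.

Lemma ratio_bound n : vnorm v = 1 -> ~~ odd d -> (2 <= d)%N -> 0 < ssq u n ->
  `|specnorm (rope theta (Xmat u v n)) / specnorm (Xmat u v n)
     - (Num.sqrt 2)^-1 * max_alpha v| <= Num.sqrt (Eerr n).
Proof.
move=> hv hd hd2 hs; rewrite specX //.
have /andP [hl hu] := spec_rope_bounds n hd hd2 hs.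
set r := specnorm _ in hl hu *.
set m := max_alpha v in hl hu *; set E := Eerr n in hl hu *.
have hsq : 0 < Num.sqrt (ssq u n) by rewrite sqrtr_gt0.
rewrite !sqrtrM ?(ltW hs) // in hl hu.
have hE : 0 <= E by exact: Eerr_ge0.
have hm : 0 <= m by exact: max_alpha_ge0.
have hl' : Num.sqrt (m ^+ 2 / 2 - E) <= r / Num.sqrt (ssq u n).
  by rewrite ler_pdivlMr // mulrC.
have hu' : r / Num.sqrt (ssq u n) <= Num.sqrt (m ^+ 2 / 2 + E).
  by rewrite ler_pdivrMr // mulrC.
have hq : (Num.sqrt 2)^-1 * m = Num.sqrt (m ^+ 2 / 2).
  by rewrite sqrtrM ?sqr_ge0 // sqrtr_sqr ger0_norm // sqrtrV // mulrC.
rewrite hq.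
have h1 : Num.sqrt (m ^+ 2 / 2 + E) <= Num.sqrt (m ^+ 2 / 2) + Num.sqrt E.
  apply: sqrt_sub_bound => //; first by rewrite addr_ge0 // mulr_ge0 ?sqr_ge0.
have h2 : Num.sqrt (m ^+ 2 / 2) <= Num.sqrt (m ^+ 2 / 2 - E) + Num.sqrt E.
  apply: sqrt_sub_bound => //; first by rewrite mulr_ge0 ?sqr_ge0.
  lra.
rewrite ler_norml; apply/andP; split; lra.
Qed.

Lemma pair_sum (f : nat -> R) M :
  \sum_(k < M) (f (2 * k)%N + f (2 * k).+1) = \sum_(a < M.*2) f a.
Proof.
elim: M => [|M IH]; first by rewrite !big_ord0.
rewrite big_ord_recr IH /= doubleS !big_ord_recr /= mul2n addrA.
by congr (_ + _ + _); apply: eq_bigr.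
Qed.

Lemma alpha_bounds : vnorm v = 1 -> ~~ odd d -> (2 <= d)%N ->
  Num.sqrt (2 / d%:R) <= max_alpha v <= 1.
Proof.
move=> hv hd hd2.
have hd2' : (d./2).*2 = d by have := odd_double_half d; rewrite (negbTE hd) add0n.
have hsum : \sum_(k < d./2) alpha v k ^+ 2 = 1.
  under eq_bigr do rewrite alpha2.
  rewrite (pair_sum (fun a => vc a ^+ 2)) hd2'.
  by rewrite -(expr1n _ 2) -hv vnorm2; apply: eq_bigr => a _; rewrite /vc vcoordE.
have hm := max_alpha_ge0 hd2.
apply/andP; split; last first.
  rewrite /max_alpha; apply: bigmax_le => // k _.
  have : alpha v k ^+ 2 <= 1.
    rewrite -hsum (bigD1 k) //= lerDl; apply: sumr_ge0 => i _; exact: sqr_ge0.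
  have := alpha_ge0 k; nra.
have hK : 0 < (d./2)%:R :> R by rewrite ltr0n half_gt0.
have h1 : 1 <= (d./2)%:R * max_alpha v ^+ 2.
  have : \sum_(k < d./2) alpha v k ^+ 2 <= \sum_(k < d./2) max_alpha v ^+ 2.
    apply: ler_sum => k _; have := alpha_le_max _ (ltn_ord k); have := alpha_ge0 k; nra.
  by rewrite hsum sumr_const card_ord mulr_natl.
rewrite -[X in _ <= X](@ger0_norm _ (max_alpha v)) // -sqrtr_sqr ler_wsqrtr //.
have hdR : d%:R = (d./2)%:R * 2 :> R by rewrite -{1}hd2' -muln2 natrM.
rewrite hdR ler_pdivrMr ?mulr_gt0 //; nra.
Qed.

End All.

Lemma inv_le_harm (R : realType) (n : nat) : (1 <= n)%N -> (n%:R : R)^-1 <= 2 * (harmonic n : R).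
Proof.
move=> hn; rewrite /harmonic /=.
have h1 : (1 : R) <= n%:R by rewrite ler1n.
have -> : (n.+1%:R : R) = n%:R + 1 by rewrite -natr1.
rewrite -[X in X <= _]mul1r ler_pdivrMr ?ltr0n // mulrAC ler_pdivlMr; last lra.
lra.
Qed.

Theorem lemma1 (R : realType) (d : nat) (theta : R) (u : nat -> R) (v : 'cV[R]_d) :
  (2 <= d)%N -> ~~ odd d -> 1 < theta ->
  vnorm v = 1 ->
  (exists c C : R, 0 < c /\ c <= C /\
     forall j : nat, (1 <= j)%N -> c <= `|u j| <= C) ->
  (fun n : nat => (\sum_(1 <= j < n) `|u j.+1 ^+ 2 - u j ^+ 2|) / n%:R) @ \oo --> 0 ->
  (forall k : nat, (k < d./2)%N -> expi_ne1 (2 * freq theta d k)) ->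
  (forall k l : nat, (k < d./2)%N -> (l < d./2)%N -> k <> l ->
     expi_ne1 (freq theta d k + freq theta d l) /\
     expi_ne1 (freq theta d k - freq theta d l)) ->
  (fun n : nat => specnorm (rope theta (Xmat u v n)) / specnorm (Xmat u v n)
                  - (Num.sqrt 2)^-1 * max_alpha v) @ \oo --> 0
  /\ Num.sqrt (2 / d%:R) <= max_alpha v <= 1.
Proof.
move=> hd2 hd hth hv [c [C [hc [hcC hu]]]] hV H1 H2.
split; last exact: alpha_bounds.
have hC : forall j, (1 <= j)%N -> `|u j| <= C by move=> j hj; case/andP: (hu j hj).
set K := Ktot R d theta v.
have hK : 0 <= K := Ktot_ge0 R d theta v.
have hc2 : 0 < c ^+ 2 by rewrite exprn_gt0.
have hs : forall n, c ^+ 2 * n%:R <= ssq R u n.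
  move=> n; rewrite /ssq.
  have : \sum_(i < n) c ^+ 2 <= \sum_(i < n) u i.+1 ^+ 2.
    apply: ler_sum => i _; have /andP [h1 h2] := hu i.+1 isT.
    have e : u i.+1 ^+ 2 = `|u i.+1| ^+ 2 by rewrite -normrX ger0_norm ?sqr_ge0.
    rewrite e; nra.
  by rewrite sumr_const card_ord mulr_natr.
pose h (n : nat) := K / c ^+ 2 * (2 * C ^+ 2 * (harmonic n : R) + Vs R u n / n%:R).
have hh : h @ \oo --> 0.
  have : h @ \oo --> K / c ^+ 2 * (2 * C ^+ 2 * 0 + 0).
    apply: cvgM; first exact: cvg_cst.
    apply: cvgD; last exact: hV.
    apply: cvgM; first exact: cvg_cst.
    exact: cvg_harmonic.
  by rewrite mulr0 addr0 mulr0.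
have key : forall n, (1 <= n)%N ->
  `|specnorm (rope theta (Xmat u v n)) / specnorm (Xmat u v n)
     - (Num.sqrt 2)^-1 * max_alpha v| <= Num.sqrt (h n).
  move=> n hn.
  have hn0 : 0 < c ^+ 2 * n%:R by rewrite mulr_gt0 // ltr0n.
  have hs' : 0 < ssq R u n := lt_le_trans hn0 (hs n).
  apply: (le_trans (ratio_bound R d theta u v n hv hd hd2 hs')); apply: ler_wsqrtr.
  apply: (le_trans (E_bound R d theta u v n C hd H1 H2 hC hs')).
  have hW : 0 <= C ^+ 2 + Vs R u n by rewrite addr_ge0 ?sqr_ge0 ?Vs_ge0.
  have e1 : (C ^+ 2 + Vs R u n) / ssq R u n <= (C ^+ 2 + Vs R u n) / (c ^+ 2 * n%:R).
    apply: ler_wpM2l => //; rewrite lef_pV2 ?posrE //.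
  have e2 := inv_le_harm R n hn.
  apply: (le_trans (ler_wpM2l hK e1)).
  have -> : K * ((C ^+ 2 + Vs R u n) / (c ^+ 2 * n%:R)) =
     K / c ^+ 2 * (C ^+ 2 * n%:R^-1 + Vs R u n / n%:R).
    by field; rewrite (gt_eqF hc) pnatr_eq0 -lt0n hn.
  rewrite /h; apply: ler_wpM2l; first exact: divr_ge0 hK (ltW hc2).
  rewrite lerD2r; apply: (le_trans (ler_wpM2l (sqr_ge0 C) e2)).
  by rewrite mulrA [C ^+ 2 * 2]mulrC.
apply/cvgr0Pnorm_lt => eps heps.
have heps2 : 0 < eps ^+ 2 by rewrite exprn_gt0.
have hnear := (proj1 (cvgr0Pnorm_lt h) hh) _ heps2.
near=> n.
have hn : (1 <= n)%N by near: n; exact: nbhs_infty_gt.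
have hlt : `|h n| < eps ^+ 2 by near: n; exact: hnear.
apply: (le_lt_trans (key n hn)).
apply: (le_lt_trans (ler_wsqrtr (ler_norm (h n)))).
have e : Num.sqrt (eps ^+ 2) = eps by rewrite sqrtr_sqr ger0_norm // ltW.
by rewrite -[X in _ < X]e ltr_sqrt.
Unshelve. all: by end_near.
Qed.
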